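(* Let $(\mathcal{C},\mathbb{E},\mathfrak{s})$ be an extriangulated category and $\mathcal{I}$ an ideal of $\mathcal{C}$. Consider the statements: (a) there is an additive subfunctor $\mathbb{F}\subseteq\mathbb{E}$ having enough injective morphisms with $\mathcal{I}=\mathrm{Ph}(\mathbb{F})$; (a') there is an additive subfunctor $\mathbb{F}\subseteq\mathbb{E}$ having enough special injective morphisms with $\mathcal{I}=\mathrm{Ph}(\mathbb{F})$; (b) $\mathcal{I}$ is a special precovering ideal; (c) $(\mathcal{I},\mathcal{I}^{\perp_{\mathbb{E}}})$ is a complete $\mathbb{E}$-cotorsion pair; (d) the additive subfunctor $\mathcal{I}^\star\subseteq\mathbb{E}$ has enough special injective morphisms and $\mathcal{I}=\mathrm{Ph}(\mathcal{I}^\star)$. Then: (I) if $\mathcal{C}$ has enough projective morphisms, (a) (and hence (a')) implies (b); (II) if $\mathcal{C}$ has enough injective objects, (b) implies (c); (III) (c) implies (d); (IV) (d) implies (a').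
   Context: An extriangulated category $(\mathcal{C},\mathbb{E},\mathfrak{s})$ (Nakaoka–Palu): additive $\mathcal{C}$, biadditive $\mathbb{E}:\mathcal{C}^{\mathrm{op}}\times\mathcal{C}\to\mathrm{Ab}$, additive realization $\mathfrak{s}$ assigning to each $\delta\in\mathbb{E}(C,A)$ an equivalence class of sequences $A\to B\to C$, forming $\mathbb{E}$-triangles $A\to B\to C\overset{\delta}{\dashrightarrow}$, satisfying (ET1)–(ET4), (ET3)$^{\mathrm{op}}$, (ET4)$^{\mathrm{op}}$. Notation $a_\star\delta=\mathbb{E}(C,a)(\delta)$, $c^\star\delta=\mathbb{E}(c,A)(\delta)$; a morphism of $\mathbb{E}$-triangles is a commuting triple $(a,b,c)$ with $a_\star\delta=c^\star\delta'$. An ideal: class of morphisms with zeros, closed under sums and two-sided composition. Additive subfunctor $\mathbb{F}$: subgroups $\mathbb{F}(C,A)\subseteq\mathbb{E}(C,A)$ stable under $a_\star,c^\star$; $\mathbb{F}$-triangles have extension in $\mathbb{F}$. $\mathrm{Ph}(\mathbb{F})$: morphisms $\varphi:X\to C$ with $\varphi^\star\delta\in\mathbb{F}(X,A)$ for all $\delta\in\mathbb{E}(C,A)$. $\mathbb{F}\text{-}\mathrm{inj}$: morphisms $i:A\to Y$ with $i_\star\delta=0$ for all $\delta\in\mathbb{F}(C,A)$. $\mathcal{I}^\star(X,A)=\{i^\star\delta\mid i\in\mathcal{I}(X,C),\ \delta\in\mathbb{E}(C,A)\}$. $\mathbb{F}$ has enough injective morphisms: every $A$ admits an $\mathbb{F}$-triangle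 $A\xrightarrow{e}B\to C\overset{\delta}{\dashrightarrow}$ with $e\in\mathbb{F}\text{-}\mathrm{inj}$; enough special injective morphisms: moreover there is an $\mathbb{E}$-triangle $A\to B'\to C'\overset{\delta'}{\dashrightarrow}$ and a morphism of $\mathbb{E}$-triangles $(\mathrm{id}_A,b,\varphi)$ from the former to it with $\varphi\in\mathrm{Ph}(\mathbb{F})$. $\mathcal{C}$ has enough projective morphisms: every $C$ admits an $\mathbb{E}$-triangle $K\to P\xrightarrow{p}C\overset{\gamma}{\dashrightarrow}$ with $p^\star\delta=0$ for all $\delta\in\mathbb{E}(C,A)$; enough injective objects: every $A$ admits an $\mathbb{E}$-triangle $A\to E\to C\overset{\delta}{\dashrightarrow}$ with $\mathbb{E}(-,E)=0$. $\mathcal{M}^{\perp_{\mathbb{E}}}=\{g:A\to Y\mid m^\star g_\star\delta=0\ \forall m\in\mathcal{M},\,m:X\to C,\ \forall\delta\in\mathbb{E}(C,A)\}$; ${}^{\perp_{\mathbb{E}}}\mathcal{M}=\{g:X\to C\mid g^\star m_\star\delta=0\ \forall m\in\mathcal{M},\,m:A\to Y,\ \forall\delta\in\mathbb{E}(C,A)\}$. $\mathbb{E}$-cotorsion pair: ideals with $\mathcal{I}={}^{\perp_{\mathbb{E}}}\mathcal{J}$, $\mathcal{J}=\mathcal{I}^{\perp_{\mathbb{E}}}$; complete if $\mathcal{I}$ is special precovering and $\mathcal{J}$ special preenveloping. Special $\mathcal{I}$-precover of $C$: $i:X\to C$ in $\mathcal{I}$ with $\mathbb{E}$-triangles $A\to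 B\to C\overset{\delta}{\dashrightarrow}$, $A'\to X\xrightarrow{i}C\overset{\delta'}{\dashrightarrow}$ and a morphism $(j,b,\mathrm{id}_C)$ between them, $j\in\mathcal{I}^{\perp_{\mathbb{E}}}$. Special $\mathcal{J}$-preenvelope of $A$: $e:A\to X$ in $\mathcal{J}$ with $\mathbb{E}$-triangles $A\xrightarrow{e}X\to Y\overset{\delta}{\dashrightarrow}$, $A\to B\to C\overset{\delta'}{\dashrightarrow}$ and a morphism $(\mathrm{id}_A,b,j)$, $j\in{}^{\perp_{\mathbb{E}}}\mathcal{J}$. Special precovering/preenveloping ideal: every object has one. *)

(* Defs.v *)
From HB Require Import structures.
From mathcomp Require Import all_boot all_algebra.
Unset Printing Implicit Defensive.
Import GRing.Theory.
Local Open Scope ring_scope.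

Record precat := Precat {
  Ob : Type;
  Hom : Ob -> Ob -> zmodType;
  cmp : forall X Y Z : Ob, Hom Y Z -> Hom X Y -> Hom X Z;  (* cmp g f = g o f *)
  idm : forall X : Ob, Hom X X
}.
Arguments Hom {p} X Y.
Arguments cmp {p X Y Z} g f.
Arguments idm {p} X.

Section AddCat.
Context {p : precat}.

Definition is_iso {X Y : Ob p} (f : Hom X Y) : Prop :=
  exists g : Hom Y X, cmp g f = idm X /\ cmp f g = idm Y.

Definition is_biprod {A B S : Ob p} (i1 : Hom A S) (i2 : Hom B S)
    (p1 : Hom S A) (p2 : Hom S B) : Prop :=
  [/\ cmp p1 i1 = idm A, cmp p2 i2 = idm B, cmp p1 i2 = 0, cmp p2 i1 = 0
    & cmp i1 p1 + cmp i2 p2 = idm S].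

Record is_additive : Prop := {
  cmpA : forall (X Y Z W : Ob p) (h : Hom Z W) (g : Hom Y Z) (f : Hom X Y),
      cmp h (cmp g f) = cmp (cmp h g) f;
  cmp1l : forall (X Y : Ob p) (f : Hom X Y), cmp (idm Y) f = f;
  cmp1r : forall (X Y : Ob p) (f : Hom X Y), cmp f (idm X) = f;
  cmpDl : forall (X Y Z : Ob p) (g g' : Hom Y Z) (f : Hom X Y),
      cmp (g + g') f = cmp g f + cmp g' f;
  cmpDr : forall (X Y Z : Ob p) (g : Hom Y Z) (f f' : Hom X Y),
      cmp g (f + f') = cmp g f + cmp g f';
  zero_obj : exists Z : Ob p, idm Z = 0;
  biprod_ex : forall A B : Ob p, exists (S : Ob p) (i1 : Hom A S) (i2 : Hom B S)
      (p1 : Hom S A) (p2 : Hom S B), is_biprod i1 i2 p1 p2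
}.

Definition seq_equiv {A B B' C : Ob p} (x : Hom A B) (y : Hom B C)
    (x' : Hom A B') (y' : Hom B' C) : Prop :=
  exists b : Hom B B', is_iso b /\ cmp b x = x' /\ cmp y' b = y.

Definition mor_sum {A A' SA B B' SB : Ob p} (pA1 : Hom SA A) (pA2 : Hom SA A')
    (iB1 : Hom B SB) (iB2 : Hom B' SB) (f : Hom A B) (g : Hom A' B') : Hom SA SB :=
  cmp iB1 (cmp f pA1) + cmp iB2 (cmp g pA2).
End AddCat.

(* real d x y  <->  the sequence A -x-> B -y-> C belongs to s(d)        *)
Record extri_data (p : precat) := ExtriData {
  Ext : Ob p -> Ob p -> zmodType;   (* Ext C A = E(C,A) *)
  pull : forall C' C A : Ob p, Hom C' C -> Ext C A -> Ext C' A;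
  push : forall C A A' : Ob p, Hom A A' -> Ext C A -> Ext C A';
  real : forall A C : Ob p, Ext C A -> forall B : Ob p, Hom A B -> Hom B C -> Prop
}.
Arguments Ext {p} e C A.
Arguments pull {p e C' C A} c d.
Arguments push {p e C A A'} a d.
Arguments real {p e A C} d {B} x y.

Section Extri.
Context {p : precat} (Ee : extri_data p).

Definition ext_sum {A A' SA C C' SC : Ob p} (iA1 : Hom A SA) (iA2 : Hom A' SA)
    (pC1 : Hom SC C) (pC2 : Hom SC C') (d : Ext Ee C A) (d' : Ext Ee C' A')
    : Ext Ee SC SA :=
  push iA1 (pull pC1 d) + push iA2 (pull pC2 d').

Definition tri_morph {A B C A' B' C' : Ob p}
    (d : Ext Ee C A) (x : Hom A B) (y : Hom B C)
    (d' : Ext Ee C' A') (x' : Hom A' B') (y' : Hom B' C')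
    (a : Hom A A') (b : Hom B B') (c : Hom C C') : Prop :=
  [/\ cmp b x = cmp x' a, cmp c y = cmp y' b & push a d = pull c d'].

Record is_extriangulated : Prop := {
  ex_additive : @is_additive p;
  pull_id : forall (C A : Ob p) (d : Ext Ee C A), pull (idm C) d = d;
  pull_comp : forall (C'' C' C A : Ob p) (c : Hom C' C) (c' : Hom C'' C')
      (d : Ext Ee C A), pull (cmp c c') d = pull c' (pull c d);
  push_id : forall (C A : Ob p) (d : Ext Ee C A), push (idm A) d = d;
  push_comp : forall (C A A' A'' : Ob p) (a : Hom A A') (a' : Hom A' A'')
      (d : Ext Ee C A), push (cmp a' a) d = push a' (push a d);
  push_pull : forall (C' C A A' : Ob p) (c : Hom C' C) (a : Hom A A')
      (d : Ext Ee C A), push a (pull c d) = pull c (push a d);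
  pull_addE : forall (C' C A : Ob p) (c : Hom C' C) (d d' : Ext Ee C A),
      pull c (d + d') = pull c d + pull c d';
  pull_addM : forall (C' C A : Ob p) (c c' : Hom C' C) (d : Ext Ee C A),
      pull (c + c') d = pull c d + pull c' d;
  push_addE : forall (C A A' : Ob p) (a : Hom A A') (d d' : Ext Ee C A),
      push a (d + d') = push a d + push a d';
  push_addM : forall (C A A' : Ob p) (a a' : Hom A A') (d : Ext Ee C A),
      push (a + a') d = push a d + push a' d;
  real_ex : forall (A C : Ob p) (d : Ext Ee C A),
      exists (B : Ob p) (x : Hom A B) (y : Hom B C), real d x y;
  real_class : forall (A B B' C : Ob p) (d : Ext Ee C A) (x : Hom A B) (y : Hom B C)
      (x' : Hom A B') (y' : Hom B' C),
      real d x y -> (real d x' y' <-> seq_equiv x y x' y');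
  real_morph : forall (A B C A' B' C' : Ob p) (d : Ext Ee C A) (x : Hom A B)
      (y : Hom B C) (d' : Ext Ee C' A') (x' : Hom A' B') (y' : Hom B' C')
      (a : Hom A A') (c : Hom C C'),
      real d x y -> real d' x' y' -> push a d = pull c d' ->
      exists b : Hom B B', cmp b x = cmp x' a /\ cmp c y = cmp y' b;
  real_zero : forall (A C S : Ob p) (i1 : Hom A S) (i2 : Hom C S)
      (p1 : Hom S A) (p2 : Hom S C), is_biprod i1 i2 p1 p2 ->
      real (0 : Ext Ee C A) i1 p2;
  real_sum : forall (A A' SA B B' SB C C' SC : Ob p)
      (iA1 : Hom A SA) (iA2 : Hom A' SA) (pA1 : Hom SA A) (pA2 : Hom SA A')
      (iB1 : Hom B SB) (iB2 : Hom B' SB) (pB1 : Hom SB B) (pB2 : Hom SB B')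
      (iC1 : Hom C SC) (iC2 : Hom C' SC) (pC1 : Hom SC C) (pC2 : Hom SC C')
      (d : Ext Ee C A) (d' : Ext Ee C' A')
      (x : Hom A B) (y : Hom B C) (x' : Hom A' B') (y' : Hom B' C'),
      is_biprod iA1 iA2 pA1 pA2 -> is_biprod iB1 iB2 pB1 pB2 ->
      is_biprod iC1 iC2 pC1 pC2 ->
      real d x y -> real d' x' y' ->
      real (ext_sum iA1 iA2 pC1 pC2 d d') (mor_sum pA1 pA2 iB1 iB2 x x')
           (mor_sum pB1 pB2 iC1 iC2 y y');
  ET3 : forall (A B C A' B' C' : Ob p) (d : Ext Ee C A) (x : Hom A B)
      (y : Hom B C) (d' : Ext Ee C' A') (x' : Hom A' B') (y' : Hom B' C')
      (a : Hom A A') (b : Hom B B'),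
      real d x y -> real d' x' y' -> cmp b x = cmp x' a ->
      exists c : Hom C C', cmp c y = cmp y' b /\ push a d = pull c d';
  ET3op : forall (A B C A' B' C' : Ob p) (d : Ext Ee C A) (x : Hom A B)
      (y : Hom B C) (d' : Ext Ee C' A') (x' : Hom A' B') (y' : Hom B' C')
      (b : Hom B B') (c : Hom C C'),
      real d x y -> real d' x' y' -> cmp c y = cmp y' b ->
      exists a : Hom A A', cmp b x = cmp x' a /\ push a d = pull c d';
  ET4 : forall (A B C D F : Ob p) (d : Ext Ee D A) (d' : Ext Ee F B)
      (f : Hom A B) (f' : Hom B D) (g : Hom B C) (g' : Hom C F),
      real d f f' -> real d' g g' ->
      exists (E : Ob p) (h : Hom A C) (h' : Hom C E) (dd : Hom D E) (e : Hom E F)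
        (d'' : Ext Ee E A),
        [/\ h = cmp g f, cmp h' g = cmp dd f' & cmp e h' = g'] /\
        [/\ real d'' h h', real (push f' d') dd e, pull dd d'' = d
           & push f d'' = pull e d'];
  ET4op : forall (D A B F C : Ob p) (d : Ext Ee B D) (d' : Ext Ee C F)
      (f' : Hom D A) (f : Hom A B) (g' : Hom F B) (g : Hom B C),
      real d f' f -> real d' g' g ->
      exists (E : Ob p) (dd : Hom D E) (e : Hom E F) (h' : Hom E A) (h : Hom A C)
        (d'' : Ext Ee C E),
        [/\ cmp h' dd = f', cmp f h' = cmp g' e & h = cmp g f] /\
        [/\ real d'' h' h, real (pull g' d) dd e, d' = push e d''
           & push dd d = pull g d'']
}.

Definition mor_class := forall X Y : Ob p, Hom X Y -> Prop.
Definition ext_class := forall C A : Ob p, Ext Ee C A -> Prop.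

Definition same_class (I J : mor_class) : Prop :=
  forall (X Y : Ob p) (f : Hom X Y), I X Y f <-> J X Y f.

Definition is_ideal (I : mor_class) : Prop :=
  [/\ forall X Y : Ob p, I X Y 0,
      forall (X Y : Ob p) (f g : Hom X Y), I X Y f -> I X Y g -> I X Y (f + g),
      forall (X Y Z : Ob p) (g : Hom Y Z) (f : Hom X Y), I X Y f -> I X Z (cmp g f)
    & forall (X Y Z : Ob p) (g : Hom Y Z) (f : Hom X Y), I Y Z g -> I X Z (cmp g f)].

Definition is_add_subfunctor (F : ext_class) : Prop :=
  [/\ forall C A : Ob p, F C A 0,
      forall (C A : Ob p) (d d' : Ext Ee C A), F C A d -> F C A d' -> F C A (d - d'),
      forall (C' C A : Ob p) (c : Hom C' C) (d : Ext Ee C A), F C A d -> F C' A (pull c d)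
    & forall (C A A' : Ob p) (a : Hom A A') (d : Ext Ee C A), F C A d -> F C A' (push a d)].

Definition Ph (F : ext_class) : mor_class :=
  fun X C phi => forall (A : Ob p) (d : Ext Ee C A), F X A (pull phi d).

Definition Finj (F : ext_class) : mor_class :=
  fun A Y i => forall (C : Ob p) (d : Ext Ee C A), F C A d -> push i d = 0.

Definition Istar (I : mor_class) : ext_class :=
  fun X A t => exists (C : Ob p) (i : Hom X C) (d : Ext Ee C A), I X C i /\ t = pull i d.

Definition perpR (M : mor_class) : mor_class :=
  fun A Y g => forall (X C : Ob p) (m : Hom X C), M X C m ->
    forall d : Ext Ee C A, pull m (push g d) = 0.

Definition perpL (M : mor_class) : mor_class :=
  fun X C g => forall (A Y : Ob p) (m : Hom A Y), M A Y m ->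
    forall d : Ext Ee C A, pull g (push m d) = 0.

Definition enough_inj_morphisms (F : ext_class) : Prop :=
  forall A : Ob p, exists (B C : Ob p) (e : Hom A B) (y : Hom B C) (d : Ext Ee C A),
    [/\ F C A d, real d e y & Finj F A B e].

Definition enough_special_inj_morphisms (F : ext_class) : Prop :=
  forall A : Ob p, exists (B C : Ob p) (e : Hom A B) (y : Hom B C) (d : Ext Ee C A),
    [/\ F C A d, real d e y, Finj F A B e &
      exists (B' C' : Ob p) (x' : Hom A B') (y' : Hom B' C') (d' : Ext Ee C' A)
             (b : Hom B B') (phi : Hom C C'),
        [/\ real d' x' y', tri_morph d e y d' x' y' (idm A) b phi & Ph F C C' phi]].

Definition enough_proj_morphisms : Prop :=
  forall C : Ob p, exists (K P : Ob p) (x : Hom K P) (q : Hom P C) (g : Ext Ee C K),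
    real g x q /\ forall (A : Ob p) (d : Ext Ee C A), pull q d = 0.

Definition enough_inj_objects : Prop :=
  forall A : Ob p, exists (E0 C : Ob p) (x : Hom A E0) (y : Hom E0 C) (d : Ext Ee C A),
    real d x y /\ forall (X : Ob p) (t : Ext Ee X E0), t = 0.

Definition special_precover (I : mor_class) (X C : Ob p) (i : Hom X C) : Prop :=
  I X C i /\
  exists (A B : Ob p) (x : Hom A B) (y : Hom B C) (d : Ext Ee C A)
         (A' : Ob p) (x' : Hom A' X) (d' : Ext Ee C A') (j : Hom A A') (b : Hom B X),
    [/\ real d x y, real d' x' i, tri_morph d x y d' x' i j b (idm C)
      & perpR I A A' j].

Definition special_precovering (I : mor_class) : Prop :=
  forall C : Ob p, exists (X : Ob p) (i : Hom X C), special_precover I X C i.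

Definition special_preenvelope (J : mor_class) (A X : Ob p) (e : Hom A X) : Prop :=
  J A X e /\
  exists (Y : Ob p) (y : Hom X Y) (d : Ext Ee Y A) (B C : Ob p) (x' : Hom A B)
         (y' : Hom B C) (d' : Ext Ee C A) (b : Hom X B) (j : Hom Y C),
    [/\ real d e y, real d' x' y', tri_morph d e y d' x' y' (idm A) b j
      & perpL J Y C j].

Definition special_preenveloping (J : mor_class) : Prop :=
  forall A : Ob p, exists (X : Ob p) (e : Hom A X), special_preenvelope J A X e.

Definition cotorsion_pair (I J : mor_class) : Prop :=
  [/\ is_ideal I, is_ideal J, same_class I (perpL J) & same_class J (perpR I)].

Definition complete_cotorsion_pair (I J : mor_class) : Prop :=
  [/\ cotorsion_pair I J, special_precovering I & special_preenveloping J].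

Definition cond_a (I : mor_class) : Prop :=
  exists F : ext_class,
    [/\ is_add_subfunctor F, enough_inj_morphisms F & same_class I (Ph F)].

Definition cond_a' (I : mor_class) : Prop :=
  exists F : ext_class,
    [/\ is_add_subfunctor F, enough_special_inj_morphisms F & same_class I (Ph F)].

Definition cond_d (I : mor_class) : Prop :=
  enough_special_inj_morphisms (Istar I) /\ same_class I (Ph (Istar I)).

End Extri.

(* Main.v *)
Require Import Defs.

Arguments pull_id {p Ee} i {C A} d.
Arguments pull_comp {p Ee} i {C'' C' C A} c c' d.
Arguments push_id {p Ee} i {C A} d.
Arguments push_comp {p Ee} i {C A A' A''} a a' d.
Arguments push_pull {p Ee} i {C' C A A'} c a d.
Arguments pull_addE {p Ee} i {C' C A} c d d'.
Arguments pull_addM {p Ee} i {C' C A} c c' d.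
Arguments push_addE {p Ee} i {C A A'} a d d'.
Arguments push_addM {p Ee} i {C A A'} a a' d.
Arguments real_ex {p Ee} i {A C} d.
Arguments real_morph {p Ee} i {A B C A' B' C' d x y d' x' y'} a c _ _ _.
Arguments real_zero {p Ee} i {A C S i1 i2 p1 p2} _.
Arguments ET3 {p Ee} i {A B C A' B' C' d x y d' x' y'} a b _ _ _.
Arguments ET3op {p Ee} i {A B C A' B' C' d x y d' x' y'} b c _ _ _.
Arguments ex_additive {p Ee} i.
Arguments cmpA {p} i {X Y Z W} h g f.
Arguments cmp1l {p} i {X Y} f.
Arguments cmp1r {p} i {X Y} f.
Arguments cmpDl {p} i {X Y Z} g g' f.
Arguments cmpDr {p} i {X Y Z} g f f'.
Arguments biprod_ex {p} i A B.
From mathcomp Require Import all_boot all_algebra.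
Import GRing.Theory.
Import Defs.
Local Open Scope ring_scope.

Lemma pull0 {p} {Ee : extri_data p} (HE : is_extriangulated Ee) (C' C A : Ob p) (c : Hom C' C) :
  pull c (0 : Ext Ee C A) = 0.
Proof.
have H := pull_addE HE c (0 : Ext Ee C A) 0.
rewrite addr0 in H; by apply/eqP; rewrite -(subrr (pull c (0 : Ext Ee C A))) {2}H addrK.
Qed.

Lemma push0 {p} {Ee : extri_data p} (HE : is_extriangulated Ee) (C A A' : Ob p) (a : Hom A A') :
  push a (0 : Ext Ee C A) = 0.
Proof.
have H := push_addE HE a (0 : Ext Ee C A) 0.
rewrite addr0 in H; by apply/eqP; rewrite -(subrr (push a (0 : Ext Ee C A))) {2}H addrK.
Qed.

Lemma pull0m {p} {Ee : extri_data p} (HE : is_extriangulated Ee) (C' C A : Ob p) (d : Ext Ee C A) :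
  pull (0 : Hom C' C) d = 0.
Proof.
have H := pull_addM HE (0 : Hom C' C) 0 d.
rewrite addr0 in H; by apply/eqP; rewrite -(subrr (pull (0 : Hom C' C) d)) {2}H addrK.
Qed.

Lemma push0m {p} {Ee : extri_data p} (HE : is_extriangulated Ee) (C A A' : Ob p) (d : Ext Ee C A) :
  push (0 : Hom A A') d = 0.
Proof.
have H := push_addM HE (0 : Hom A A') 0 d.
rewrite addr0 in H; by apply/eqP; rewrite -(subrr (push (0 : Hom A A') d)) {2}H addrK.
Qed.

Lemma pullB {p} {Ee : extri_data p} (HE : is_extriangulated Ee) (C' C A : Ob p) (c : Hom C' C) (d d' : Ext Ee C A) :
  pull c (d - d') = pull c d - pull c d'.
Proof.
have H := pull_addE HE c (d - d') d'.
by rewrite subrK in H; rewrite H addrK.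
Qed.

Lemma cmp0r{p} (HA : @is_additive p) (X Y Z : Ob p) (g : Hom Y Z) : cmp g (0 : Hom X Y) = 0.
Proof.
have H := cmpDr HA g (0 : Hom X Y) 0.
rewrite addr0 in H; by apply/eqP; rewrite -(subrr (cmp g (0 : Hom X Y))) {2}H addrK.
Qed.

Lemma cmp0l{p} (HA : @is_additive p) (X Y Z : Ob p) (f : Hom X Y) : cmp (0 : Hom Y Z) f = 0.
Proof.
have H := cmpDl HA (0 : Hom Y Z) 0 f.
rewrite addr0 in H; by apply/eqP; rewrite -(subrr (cmp (0 : Hom Y Z) f)) {2}H addrK.
Qed.

Lemma push_infl0 {p} {Ee : extri_data p} (HE : is_extriangulated Ee) {A B C : Ob p}
  {d : Ext Ee C A} {x : Hom A B} {y : Hom B C} : real d x y -> push x d = 0.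
Proof.
move=> Hd.
have [S [i1 [i2 [p1 [p2 Hb]]]]] := biprod_ex (ex_additive HE) B C.
have Hz := real_zero HE Hb.
have [c [_ ->]] := ET3 HE x i1 Hd Hz (erefl (cmp i1 x)).
exact: (pull0 HE).
Qed.

Lemma pull_defl0 {p} {Ee : extri_data p} (HE : is_extriangulated Ee) {A B C : Ob p}
  {d : Ext Ee C A} {x : Hom A B} {y : Hom B C} : real d x y -> pull y d = 0.
Proof.
move=> Hd.
have [S [i1 [i2 [p1 [p2 Hb]]]]] := biprod_ex (ex_additive HE) A B.
have Hz := real_zero HE Hb.
have [a [_ H]] := ET3op HE p2 y Hz Hd (erefl (cmp y p2)).
by rewrite -H (push0 HE).
Qed.

Lemma factor_defl {p} {Ee : extri_data p} (HE : is_extriangulated Ee) {A B C X : Ob p}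
  {d : Ext Ee C A} {x : Hom A B} {y : Hom B C} (g : Hom X C) :
  real d x y -> pull g d = 0 -> exists h : Hom X B, g = cmp y h.
Proof.
move=> Hd Hg.
have HA := ex_additive HE.
have [S [i1 [i2 [p1 [p2 Hb]]]]] := biprod_ex HA A X.
have Hz := real_zero HE Hb.
have [|b [_ Hb2]] := real_morph HE (idm A) g Hz Hd; first by rewrite (push0 HE) Hg.
exists (cmp b i2).
case: Hb => _ H22 _ _ _.
by rewrite (cmpA HA) -Hb2 -(cmpA HA) H22 (cmp1r HA).
Qed.

Lemma factor_infl {p} {Ee : extri_data p} (HE : is_extriangulated Ee) {A B C Z : Ob p}
  {d : Ext Ee C A} {x : Hom A B} {y : Hom B C} (g : Hom A Z) :
  real d x y -> push g d = 0 -> exists h : Hom B Z, g = cmp h x.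
Proof.
move=> Hd Hg.
have HA := ex_additive HE.
have [S [i1 [i2 [p1 [p2 Hb]]]]] := biprod_ex HA Z C.
have Hz := real_zero HE Hb.
have [|b [Hb1 _]] := real_morph HE g (idm C) Hd Hz; first by rewrite Hg (pull0 HE).
exists (cmp p1 b).
case: Hb => H11 _ _ _ _.
by rewrite -(cmpA HA) Hb1 (cmpA HA) H11 (cmp1l HA).
Qed.

Lemma ext_from_conn {p} {Ee : extri_data p} (HE : is_extriangulated Ee) {A B C W : Ob p}
  {d0 : Ext Ee C A} {x : Hom A B} {y : Hom B C} (t : Ext Ee W A) :
  real d0 x y -> push x t = 0 -> exists f : Hom W C, t = pull f d0.
Proof.
move=> Hd Ht.
have HA := ex_additive HE.
have [T [tx [ty Hreal]]] := real_ex HE t.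
have [h Hh] := factor_infl HE x Hreal Ht.
have [|c [_ Hc]] := ET3 HE (idm A) h Hreal Hd; first by rewrite -Hh (cmp1r HA).
by exists c; rewrite -Hc push_id.
Qed.

Lemma ext_from_conn' {p} {Ee : extri_data p} (HE : is_extriangulated Ee) {K P C A : Ob p}
  {g : Ext Ee C K} {x : Hom K P} {q : Hom P C} (dl : Ext Ee C A) :
  real g x q -> pull q dl = 0 -> exists h : Hom K A, dl = push h g.
Proof.
move=> Hg Hq.
have HA := ex_additive HE.
have [D [dx [dy Hreal]]] := real_ex HE dl.
have [b Hb] := factor_defl HE q Hreal Hq.
have [|a [_ Ha]] := ET3op HE b (idm C) Hg Hreal; first by rewrite -Hb (cmp1l HA).
by exists a; rewrite Ha pull_id.
Qed.

Lemma Istar_sub {p} {Ee : extri_data p} (HE : is_extriangulated Ee) (I : @mor_class p)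
  (HI : is_ideal I) : is_add_subfunctor Ee (Istar Ee I).
Proof.
have HA := ex_additive HE.
case: HI => HI0 HID HIl HIr.
split.
- move=> C A; exists C, 0, 0; split; first exact: HI0.
  by rewrite (pull0 HE).
- move=> C A _ _ [C1 [i1 [d1 [Hi1 ->]]]] [C2 [i2 [d2 [Hi2 ->]]]].
  have [S [j1 [j2 [q1 [q2 Hb]]]]] := biprod_ex HA C1 C2.
  case: Hb => H11 H22 H12 H21 _.
  exists S, (cmp j1 i1 + cmp j2 i2), (pull q1 d1 - pull q2 d2); split.
    by apply: HID; apply: HIl.
  rewrite (pullB HE) -!(pull_comp HE) !(cmpDr HA) !(cmpA HA) H11 H22 H12 H21.
  by rewrite !(cmp0l HA) addr0 add0r !(cmp1l HA).
- move=> C' C A c _ [C1 [i1 [d1 [Hi1 ->]]]].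
  exists C1, (cmp i1 c), d1; split; first exact: HIr.
  by rewrite (pull_comp HE).
- move=> C A A' a _ [C1 [i1 [d1 [Hi1 ->]]]].
  exists C1, i1, (push a d1); split => //.
  by rewrite (push_pull HE).
Qed.

Lemma partIV {p} {Ee : extri_data p} (HE : is_extriangulated Ee) (I : @mor_class p)
  (HI : is_ideal I) : cond_d Ee I -> cond_a' Ee I.
Proof.
case=> H1 H2; exists (Istar Ee I); split => //; exact: Istar_sub.
Qed.

Lemma partIII {p} {Ee : extri_data p} (HE : is_extriangulated Ee) (I : @mor_class p)
  (HI : is_ideal I) : complete_cotorsion_pair Ee I (perpR Ee I) -> cond_d Ee I.
Proof.
case=> [[_ _ HIJ _] _ Henv].
have Hph : forall X C (f : Hom X C), I X C f -> Ph Ee (Istar Ee I) X C f.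
  by move=> X C f Hf A d; exists C, f, d.
split; last first.
  move=> X C g; split; first exact: Hph.
  move=> Hg; apply/HIJ => A Y m Hm d.
  rewrite -(push_pull HE).
  have [C1 [i [d1 [Hi ->]]]] := Hg A d.
  by rewrite (push_pull HE) (Hm _ _ _ Hi).
move=> A.
have [X [e [He [Y [y [d [B [C [x' [y' [d' [b [j [Hd Hd' Hm Hj]]]]]]]]]]]]]] := Henv A.
have HjI : I Y C j by apply/HIJ.
case: (Hm) => _ _ Hm3.
exists X, Y, e, y, d; split => //.
- exists C, j, d'; split => //. by rewrite -Hm3 (push_id HE).
- move=> C1 _ [C2 [i [d1 [Hi ->]]]].
  by rewrite (push_pull HE) (He _ _ _ Hi).
- exists B, C, x', y', d', b, j; split => //. exact: Hph.
Qed.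

Lemma partI {p} {Ee : extri_data p} (HE : is_extriangulated Ee) (I : @mor_class p)
  (HI : is_ideal I) : enough_proj_morphisms Ee -> cond_a Ee I -> special_precovering Ee I.
Proof.
move=> Hproj [F [[HF0 HFB HFpull HFpush] Hinj HIF]] C.
have [K [P [x [q [g [Hg Hq]]]]]] := Hproj C.
have [B0 [C0 [e [y0 [d [HdF Hd He]]]]]] := Hinj K.
have [X [x' [i Hr]]] := real_ex HE (push e g).
exists X, i; split.
- apply/HIF => A dl.
  have [BA [CA [eA [yA [dA [HdA HrA HeA]]]]]] := Hinj A.
  suff Hc : push eA (pull i dl) = 0.
    by have [f ->] := ext_from_conn HE (pull i dl) HrA Hc; apply: HFpull.
  rewrite (push_pull HE).
  have [h Hh] := ext_from_conn' HE dl Hg (Hq A dl).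
  rewrite Hh -(push_comp HE).
  have [|k Hk] := factor_infl HE (cmp eA h) Hd.
    by rewrite (push_comp HE); apply: HeA; apply: HFpush.
  by rewrite Hk (push_comp HE) -(push_pull HE) (pull_defl0 HE Hr) (push0 HE).
- have [|b [Hb1 Hb2]] := real_morph HE e (idm C) Hg Hr; first by rewrite (pull_id HE).
  exists K, P, x, q, g, B0, x', (push e g), e, b; split => //.
    by split => //; rewrite (pull_id HE).
  move=> X2 C2 m Hm d2.
  rewrite -(push_pull HE); apply: He.
  exact: (proj1 (HIF _ _ m) Hm K d2).
Qed.

Lemma partIa' {p} {Ee : extri_data p} (HE : is_extriangulated Ee) (I : @mor_class p)
  (HI : is_ideal I) : enough_proj_morphisms Ee -> cond_a' Ee I -> special_precovering Ee I.
Proof.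
move=> Hproj [F [HF Hinj HIF]]; apply: (partI HE I HI Hproj).
exists F; split => // A.
have [B [C [e [y [d [H1 H2 H3 _]]]]]] := Hinj A.
by exists B, C, e, y, d.
Qed.

Lemma partII {p} {Ee : extri_data p} (HE : is_extriangulated Ee) (I : @mor_class p)
  (HI : is_ideal I) : enough_inj_objects Ee -> special_precovering Ee I ->
         complete_cotorsion_pair Ee I (perpR Ee I).
Proof.
move=> Hinj Hprec.
have HIJ : forall X C (g : Hom X C), I X C g -> perpL Ee (perpR Ee I) X C g.
  by move=> X C g Hg A Y m Hm d; exact: Hm X C g Hg d.
split; last first.
- move=> A.
  have [E0 [C [x [y [d0 [Hd0 HE0]]]]]] := Hinj A.
  have [X [i [HiI [A1 [B1 [x1 [y1 [d1 [A2 [x2 [d2 [j [b [Hd1 Hd2 [_ _ Hm3] Hj]]]]]]]]]]]]]] := Hprec C.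
  rewrite (pull_id HE) in Hm3.
  have [M [e [z Hr]]] := real_ex HE (pull i d0).
  have [|b' [Hb1 Hb2]] := real_morph HE (idm A) i Hr Hd0; first by rewrite (push_id HE).
  exists M, e; split.
  + move=> X2 C2 m Hm t.
    have [f ->] := ext_from_conn HE t Hd0 (HE0 _ _).
    have Hfm : pull (cmp f m) d2 = 0.
      by rewrite -Hm3 (pull_comp HE) -(push_pull HE) (Hj _ _ m Hm).
    have [g' Hg'] := factor_defl HE (cmp f m) Hd2 Hfm.
    rewrite (push_pull HE) -(pull_comp HE) Hg' (pull_comp HE) -(push_pull HE).
    by rewrite (push_infl0 HE Hr) (pull0 HE).
  + exists X, z, (pull i d0), E0, C, x, y, d0, b', i; split => //.
      by split => //; rewrite (push_id HE).
    exact: HIJ.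
- exact: Hprec.
split => //.
- split.
  + by move=> A Y X C m Hm d; rewrite (push0m HE) (pull0 HE).
  + move=> A Y f g Hf Hg X C m Hm d.
    by rewrite (push_addM HE) (pull_addE HE) (Hf _ _ _ Hm) (Hg _ _ _ Hm) addr0.
  + move=> A Y Z g f Hf X C m Hm d.
    by rewrite (push_comp HE) -(push_pull HE) (Hf _ _ _ Hm) (push0 HE).
  + move=> A Y Z g f Hg X C m Hm d.
    by rewrite (push_comp HE) (Hg _ _ _ Hm).
- move=> X C g; split; first exact: HIJ.
  move=> Hg.
  have [X' [i [HiI [A [B [x [y [d [A' [x' [d' [j [b [Hd Hd' [_ _ Hm3] Hj]]]]]]]]]]]]]] := Hprec C.
  rewrite (pull_id HE) in Hm3.
  have [|h ->] := factor_defl HE g Hd'; first by rewrite -Hm3; exact: Hg _ _ j Hj d.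
  by case: HI => _ _ _ HIr; apply: HIr.
Qed.

Theorem theorem4p5 (p : precat) (Ee : extri_data p)
    (HE : is_extriangulated Ee) (I : @mor_class p) (HI : is_ideal I) :
  [/\ (enough_proj_morphisms Ee ->
         (cond_a Ee I -> special_precovering Ee I) /\
         (cond_a' Ee I -> special_precovering Ee I)),
      (enough_inj_objects Ee -> special_precovering Ee I ->
         complete_cotorsion_pair Ee I (perpR Ee I)),
      (complete_cotorsion_pair Ee I (perpR Ee I) -> cond_d Ee I)
    & (cond_d Ee I -> cond_a' Ee I)].
Proof.
split.
- move=> Hproj; split; [exact: partI | exact: partIa'].
- exact: partII.
- exact: partIII.
- exact: partIV.
Qed.
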